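(* For every even integer $k\ge 4$, the graph $M_{\rm II}(k)$ is not word-representable.
   Context: For even $k\ge4$, $M_{\rm II}(k)$ is the split graph with clique $C=\{c_1,\dots,c_k\}$ and independent set $I=\{b_1,b_2,a_1,\dots,a_{k-2}\}$, where $N(b_1)=\{c_1,\dots,c_{k-2},c_k\}$, $N(b_2)=\{c_2,\dots,c_k\}$, and $N(a_i)=\{c_i,c_{i+1}\}$ for $1\le i\le k-2$. A graph $G=(V,E)$ is word-representable if there is a word $w$ over $V$ such that for all distinct $a,b\in V$, $ab\in E$ iff $a$ and $b$ alternate in $w$ (i.e. the subsequence of $w$ formed by all occurrences of $a$ and $b$ is $abab\cdots$ or $baba\cdots$). *)

(* Defs.v *)
From mathcomp Require Import all_boot.
Set Implicit Arguments. Unset Strict Implicit. Unset Printing Implicit Defensive.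

(* Vertices of M_II(k):  inl i        = c_(i+1)   (i < k)
                         inr (inl b)  = b_1 if b = false, b_2 if b = true
                         inr (inr i)  = a_(i+1)   (i < k-2)            *)
Definition MIIV (k : nat) : finType := ('I_k + (bool + 'I_(k - 2)))%type.

Definition MII_ci (k : nat) (x : bool + 'I_(k - 2)) (j : nat) : bool :=
  match x with
  | inl false => j != k - 2          (* N(b_1) = {c_1..c_(k-2), c_k} *)
  | inl true  => j != 0              (* N(b_2) = {c_2..c_k} *)
  | inr i => (j == i) || (j == i.+1) (* N(a_(i+1)) = {c_(i+1), c_(i+2)} *)
  end.

Definition MII_adj (k : nat) (u v : MIIV k) : bool :=
  match u, v with
  | inl i, inl j => i != j
  | inl j, inr x => MII_ci x j
  | inr x, inl j => MII_ci x j
  | inr _, inr _ => false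
  end.

Definition alternate (T : eqType) (w : seq T) (a b : T) : bool :=
  let s := filter (fun x => (x == a) || (x == b)) w in
  all (fun p => p.1 != p.2) (zip s (behead s)).

Definition word_representable (T : finType) (e : rel T) : Prop :=
  exists w : seq T,
    (forall x : T, x \in w) /\
    (forall a b : T, a != b -> e a b = alternate w a b).

(* Main.v *)
Require Import Defs.
From mathcomp Require Import all_boot zify.
Set Implicit Arguments. Unset Strict Implicit. Unset Printing Implicit Defensive.

Definition cyc (x y z : nat) := (x < y /\ y < z) \/ (y < z /\ z < x) \/ (z < x /\ x < y).

Section Word.
Variable T : eqType.

Definition alt_s (s : seq T) := all (fun p => p.1 != p.2) (zip s (behead s)).

Lemma alt_s_cons x s :
  alt_s (x :: s) = (if s is y :: _ then x != y else true) && alt_s s.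
Proof. by case: s. Qed.

Lemma take_cons_all (P : seq T -> Prop) x w :
  (forall n, P (take n (x :: w))) <-> P [::] /\ (forall n, P (x :: take n w)).
Proof.
split.
- move=> H; split; [exact: (H 0) | move=> n; exact: (H n.+1)].
- by move=> [H0 H] [|n] /=; [exact: H0 | exact: H].
Qed.

Variables a b : T.
Hypothesis nab : a != b.
Let p := fun x : T => (x == a) || (x == b).

Definition R (d : bool) (s : seq T) := count_mem b s <= d + count_mem a s /\
             d + count_mem a s <= (count_mem b s).+1.

Lemma Qlem (w : seq T) (d : bool) :
  (forall n, R d (take n w)) <->
  (alt_s (filter p w) &&
     (if filter p w is y :: _ then y == (if d then b else a) else true)).
Proof.
elim: w d => [|x w IH] d.
  rewrite /R; split => [_|_ n] //=; case: d => //=; lia.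
rewrite take_cons_all /R /=.
have hd : forall s, all p s ->
   (if s is y :: _ then a != y else true) = (if s is y :: _ then y == b else true).
  case=> [|y s] //= /andP[py _]; move: py; rewrite /p.
  by case/orP=> /eqP->; rewrite ?eqxx ?(negbTE nab) // eq_sym.
have hd2 : forall s, all p s ->
   (if s is y :: _ then b != y else true) = (if s is y :: _ then y == a else true).
  case=> [|y s] //= /andP[py _]; move: py; rewrite /p.
  by case/orP=> /eqP->; rewrite ?eqxx ?(negbTE nab) // eq_sym ?(negbTE nab).
have allp : all p (filter p w) by apply/allP=> y; rewrite mem_filter => /andP[].
case: (eqVneq x a) => [->|xa].
  rewrite /p eqxx /= alt_s_cons (negbTE nab).
  case: d.
    split; first by move=> [_ /(_ 0)]; rewrite take0 (negbTE nab) /=; lia.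
    by rewrite (negbTE nab) andbF.
  rewrite eqxx andbT -/p.
  have := IH true; rewrite /R -(hd _ allp).
  move=> [I1 I2]; split.
    move=> [_ H]; rewrite andbC; apply: I1 => n; have := H n; lia.
  move=> H; split=> //; move=> n.
  have := I2 ; rewrite andbC => /(_ H) /(_ n); lia.
case: (eqVneq x b) => [->|xb].
  rewrite /p eqxx orbT /= alt_s_cons.
  case: d.
    rewrite eqxx andbT -/p.
    have := IH false; rewrite /R -(hd2 _ allp).
    move=> [I1 I2]; split.
      move=> [_ H]; rewrite andbC; apply: I1 => n; have := H n; lia.
    move=> H; split=> //; move=> n.
    have := I2 ; rewrite andbC => /(_ H) /(_ n); lia.
  rewrite eq_sym (negbTE nab) andbF; split=> //; move=> [_ /(_ 0)]; rewrite take0 /=; lia.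
have -> : p x = false by rewrite /p (negbTE xa) (negbTE xb).
rewrite -IH /R /=; split; [by case | move=> H; split=> //; case: (d) => /=; lia].
Qed.

Lemma first_a (w : seq T) : a \in w -> index a w < index b w ->
  exists s, filter p w = a :: s.
Proof.
elim: w => [|x w IH] //=.
case: (eqVneq x a) => [->|xa]; first by rewrite /p eqxx /=; eexists.
case: (eqVneq x b) => [->|xb] //.
rewrite inE eq_sym (negbTE xa) /= ltnS => /IH H /H [s Hs].
by rewrite /p (negbTE xa) (negbTE xb) /= -/p Hs; eexists.
Qed.

End Word.

Section ST.
Variable T : eqType.
Variable e : rel T.
Variable w : seq T.
Hypothesis Hall : forall x, x \in w.
Hypothesis Hrep : forall a b, a != b -> e a b = alternate w a b.

Let f x := index x w.

Lemma neq_of_lt x y : f x < f y -> x != y.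
Proof. by apply: contraTneq => ->; rewrite ltnn. Qed.

Lemma alt_Q u v : f u < f v -> e u v -> forall n, R u v false (take n w).
Proof.
move=> lt euv.
have nuv := neq_of_lt lt.
have [s Hs] := first_a (Hall u) lt.
apply/(Qlem nuv); move: euv; rewrite Hrep // /alternate /=.
by rewrite Hs eqxx andbT -Hs.
Qed.

Lemma Q_alt u v : f u < f v -> (forall n, R u v false (take n w)) -> e u v.
Proof.
move=> lt H.
have nuv := neq_of_lt lt.
rewrite Hrep //; move/(Qlem nuv): H => /andP[].
by rewrite /alternate.
Qed.

Lemma st4 v0 v1 v2 v3 : f v0 < f v1 -> f v1 < f v2 -> f v2 < f v3 ->
  e v0 v1 -> e v1 v2 -> e v2 v3 -> e v0 v3 -> e v0 v2 /\ e v1 v3.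
Proof.
move=> l1 l2 l3 e1 e2 e3 e4.
have Q1 := alt_Q l1 e1. have Q2 := alt_Q l2 e2. have Q3 := alt_Q l3 e3.
have l4 : f v0 < f v3 by lia.
have Q4 := alt_Q l4 e4.
split.
  apply: Q_alt; first lia.
  move=> n; move: (Q1 n) (Q2 n) (Q3 n) (Q4 n); rewrite /R /=; lia.
apply: Q_alt; first lia.
move=> n; move: (Q1 n) (Q2 n) (Q3 n) (Q4 n); rewrite /R /=; lia.
Qed.


Hypothesis esym : forall x y, e x y = e y x.

Hypothesis eirr : forall x, ~~ e x x.

Lemma sameside x y p q : e x p -> e x q -> e y p -> e y q -> ~~ e x y ->
  x != y -> p != q ->
  (cyc (f p) (f x) (f q) <-> cyc (f p) (f y) (f q)).
Proof.
move=> exp exq eyp eyq nxy dxy dpq.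
have dist : forall a b, a != b -> f a <> f b.
  by move=> a b nab H; move/eqP: nab; apply; exact: (index_inj a (Hall a) (Hall b)).
have dE : forall a b, e a b -> f a <> f b.
  move=> a b eab; apply: dist; apply/eqP => E; subst; by rewrite (negbTE (eirr b)) in eab.
have epx : e p x by rewrite esym. have eqx : e q x by rewrite esym.
have epy : e p y by rewrite esym. have eqy : e q y by rewrite esym.
have nyx : ~~ e y x by rewrite esym.
have K1 : forall a b c d, e a b -> e b c -> e c d -> e a d -> ~~ e a c ->
    ~ (f a < f b /\ f b < f c /\ f c < f d).
  move=> a b c d e1 e2 e3 e4 n [l1 [l2 l3]].
  by have [H _] := st4 l1 l2 l3 e1 e2 e3 e4; rewrite H in n.
have K2 : forall a b c d, e a b -> e b c -> e c d -> e a d -> ~~ e b d ->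
    ~ (f a < f b /\ f b < f c /\ f c < f d).
  move=> a b c d e1 e2 e3 e4 n [l1 [l2 l3]].
  by have [_ H] := st4 l1 l2 l3 e1 e2 e3 e4; rewrite H in n.
have := K1 x p y q exp epy eyq exq nxy.
have := K1 x q y p exq eqy eyp exp nxy.
have := K1 y p x q eyp epx exq eyq nyx.
have := K1 y q x p eyq eqx exp eyp nyx.
have := K2 p x q y epx exq eqy epy nxy.
have := K2 p y q x epy eyq eqx epx nyx.
have := K2 q x p y eqx exp epy eqy nxy.
have := K2 q y p x eqy eyp epx eqx nyx.
have := dE _ _ exp. have := dE _ _ exq. have := dE _ _ eyp. have := dE _ _ eyq.
have := dist _ _ dxy. have := dist _ _ dpq.
rewrite /cyc; lia.
Qed.
End ST.

Definition cycd (d : bool) a b c := if d then cyc a b c else cyc c b a.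

Section Chain.
Variables (k : nat) (F : nat -> nat).
Hypothesis Finj : forall x y, x < k -> y < k -> x != y -> F x <> F y.
Hypothesis HA : forall j, j.+2 < k -> forall x y, x < k -> y < k ->
  x != j -> x != j.+1 -> y != j -> y != j.+1 ->
  (cyc (F j) (F x) (F j.+1) <-> cyc (F j) (F y) (F j.+1)).

Lemma chain : 3 <= k -> forall j, 0 < j -> j.+1 < k -> exists d, forall x, x < k ->
  x != 0 -> x != j -> (cycd d (F 0) (F x) (F j) <-> (0 < x /\ x < j)).
Proof.
move=> k3; elim=> [//|j IH] _ hjk.
case: (posnP j) => [->|jpos].
  have [c|c] : cyc (F 0) (F 2) (F 1) \/ ~ cyc (F 0) (F 2) (F 1) by rewrite /cyc; lia.
    exists false => x xk x0 x1 /=.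
    have := HA (j:=0) k3 xk k3 x0 x1 isT isT.
    have := Finj (x:=0) (y:=x) _ xk; have := Finj (x:=1) (y:=x) _ xk.
    have := Finj (x:=0) (y:=1) _ _ isT.
    move: x0 x1 c; rewrite /cyc; lia.
  exists true => x xk x0 x1 /=.
  have := HA (j:=0) k3 xk k3 x0 x1 isT isT.
  have := Finj (x:=0) (y:=x) _ xk; have := Finj (x:=1) (y:=x) _ xk.
  have := Finj (x:=0) (y:=1) _ _ isT.
  move: x0 x1 c; rewrite /cyc; lia.
have [d Hd] := IH jpos (ltnW hjk).
exists d => x xk x0 xj1.
have Fj1 := Hd j.+1 (ltnW hjk) isT (negbT (gtn_eqF (ltnSn j))).
have D1 := Finj (x:=0) (y:=j) _ (ltnW (ltnW hjk)).
have D2 := Finj (x:=0) (y:=j.+1) _ (ltnW hjk).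
have D3 := Finj (x:=j) (y:=j.+1) (ltnW (ltnW hjk)) (ltnW hjk).
case: (eqVneq x j) => [->|xj].
  have d1 : F 0 <> F j by apply: D1; lia.
  have d2 : F 0 <> F j.+1 by apply: D2; lia.
  have d3 : F j <> F j.+1 by apply: D3; lia.
  have N1 : ~ cycd d (F 0) (F j.+1) (F j) by rewrite Fj1; lia.
  have -> : (0 < j /\ j < j.+1) <-> True by lia.
  move: N1; case: d {Hd Fj1} => /=; rewrite /cyc; lia.
have Fx := Hd x xk x0 xj.
have HAx := HA hjk xk (y:=0) _ xj xj1.
have D4 := Finj (x:=x) (y:=0) xk.
have D5 := Finj (x:=x) (y:=j) xk.
have D6 := Finj (x:=x) (y:=j.+1) xk.
have N1 : ~ cycd d (F 0) (F j.+1) (F j) by rewrite Fj1; lia.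
have HAx' : cyc (F j) (F x) (F j.+1) <-> cyc (F j) (F 0) (F j.+1).
  by apply: HAx; lia.
clear HAx.
have d1 : F 0 <> F j by apply: D1; lia.
have d2 : F 0 <> F j.+1 by apply: D2; lia.
have d3 : F j <> F j.+1 by apply: D3; lia.
have d4 : F x <> F 0 by apply: D4; lia.
have d5 : F x <> F j by apply: D5; lia.
have d6 : F x <> F j.+1 by apply: D6; lia.
clear D1 D2 D3 D4 D5 D6.
have [xlt|xge] : (0 < x /\ x < j) \/ ~ (0 < x /\ x < j) by lia.
  have C : cycd d (F 0) (F x) (F j) by rewrite Fx.
  have -> : (0 < x /\ x < j.+1) <-> True by lia.
  move: N1 C; case: d {Hd Fx Fj1} => /=; rewrite /cyc; lia.
have C : ~ cycd d (F 0) (F x) (F j) by rewrite Fx.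
have -> : (0 < x /\ x < j.+1) <-> False by lia.
move: N1 C HAx'; case: d {Hd Fx Fj1} => /=; rewrite /cyc; lia.
Qed.
End Chain.

Section Main.
Variable n : nat.
Let k := n.+4.
Let e := @MII_adj k.
Definition Cv (j : nat) : MIIV k := inl (inord j).
Definition Av (i : nat) : MIIV k := inr (inr (inord i : 'I_n.+2)).
Definition Bv (b : bool) : MIIV k := inr (inl b).

Lemma esymM : forall x y, e x y = e y x.
Proof. by case=> [i|[b|i]] [j|[c|j]] //=; rewrite eq_sym. Qed.

Lemma eirrM : forall x, ~~ e x x.
Proof. by case=> [i|[b|i]] //=; rewrite eqxx. Qed.

Lemma eCC x y : x < k -> y < k -> e (Cv x) (Cv y) = (x != y).
Proof. by move=> hx hy; rewrite /e /= -(inj_eq val_inj) /= !inordK. Qed.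

Lemma eCA x i : x < k -> i < n.+2 -> e (Cv x) (Av i) = (x == i) || (x == i.+1).
Proof. by move=> hx hi; rewrite /e /= !inordK. Qed.

Lemma eCB0 x : x < k -> e (Cv x) (Bv false) = (x != n.+2).
Proof. by move=> hx; rewrite /e /= inordK // /k; congr (~~ (_ == _)); lia. Qed.

Lemma eCB1 x : x < k -> e (Cv x) (Bv true) = (x != 0).
Proof. by move=> hx; rewrite /e /= inordK. Qed.

End Main.

Theorem lemma10 (k : nat) : 4 <= k -> ~~ odd k ->
  ~ word_representable (@MII_adj k).
Proof.
move=> k4; have [n ->] : exists n, k = n.+4 by exists (k - 4); lia.
move=> _ [w [Hall Hrep]].
set e := @MII_adj n.+4 in Hrep.
have SS := sameside Hall Hrep (@esymM n) (@eirrM n).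
set F := fun x => index (Cv n x) w.
have Cinj : forall x y, x < n.+4 -> y < n.+4 -> x != y -> Cv n x != Cv n y.
  by move=> x y hx hy nxy; rewrite -(eCC hx hy) in nxy; apply: contraTneq nxy => ->; rewrite eirrM.
have Finj : forall x y, x < n.+4 -> y < n.+4 -> x != y -> F x <> F y.
  move=> x y hx hy nxy H; move/eqP: (Cinj x y hx hy nxy); apply.
  exact: (index_inj (Cv n x) (Hall _) (Hall _) H).
have HA : forall j, j.+2 < n.+4 -> forall x y, x < n.+4 -> y < n.+4 ->
  x != j -> x != j.+1 -> y != j -> y != j.+1 ->
  (cyc (F j) (F x) (F j.+1) <-> cyc (F j) (F y) (F j.+1)).
  move=> j hj x y hx hy xj xj1 yj yj1.
  have hj' : j < n.+2 by lia.
  have G : forall z, z < n.+4 -> z != j -> z != j.+1 ->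
      (cyc (F j) (F z) (F j.+1) <-> cyc (F j) (index (Av n j) w) (F j.+1)).
    move=> z hz zj zj1; apply: SS.
    - by rewrite /e eCC //; lia.
    - by rewrite /e eCC //; lia.
    - by rewrite /e esymM eCA //; lia.
    - by rewrite /e esymM eCA //; lia.
    - by rewrite /e eCA //; lia.
    - by [].
    - by apply: Cinj; lia.
  by rewrite G // G.
have [d Hd] := chain Finj HA (isT : 3 <= n.+4) (isT : 0 < n.+2) (ltnSn n.+3).
have H1 := Hd 1 isT isT (isT : 1 != n.+2).
have H2 := Hd n.+3 (ltnSn n.+3) isT (negbT (gtn_eqF (ltnSn n.+2))).
have C1 : 1 < n.+4 by [].
have C2 : n.+2 < n.+4 by lia.
have C3 : n.+3 < n.+4 by lia.
have C0 : 0 < n.+4 by [].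
have S1 : cyc (F n.+3) (index (Bv n false) w) (F 1) <-> cyc (F n.+3) (F n.+2) (F 1).
  apply: SS.
  - by rewrite /e esymM eCB0 //; lia.
  - by rewrite /e esymM eCB0 //; lia.
  - by rewrite /e eCC //; lia.
  - by rewrite /e eCC //; lia.
  - by rewrite /e esymM eCB0 //; lia.
  - by [].
  - by apply: Cinj; lia.
have S2 : cyc (F n.+3) (index (Bv n true) w) (F 1) <-> cyc (F n.+3) (F 0) (F 1).
  apply: SS.
  - by rewrite /e esymM eCB1 //; lia.
  - by rewrite /e esymM eCB1 //; lia.
  - by rewrite /e eCC //; lia.
  - by rewrite /e eCC //; lia.
  - by rewrite /e esymM eCB1 //; lia.
  - by [].
  - by apply: Cinj; lia.
have S3 : cyc (F n.+3) (index (Bv n false) w) (F 1) <->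
          cyc (F n.+3) (index (Bv n true) w) (F 1).
  apply: SS.
  - by rewrite /e esymM eCB0 //; lia.
  - by rewrite /e esymM eCB0 //; lia.
  - by rewrite /e esymM eCB1 //; lia.
  - by rewrite /e esymM eCB1 //; lia.
  - by [].
  - by [].
  - by apply: Cinj; lia.
have d01 : F 0 <> F 1 by apply: Finj.
have d02 : F 0 <> F n.+2 by apply: Finj.
have d03 : F 0 <> F n.+3 by apply: Finj.
have d12 : F 1 <> F n.+2 by apply: Finj; rewrite // eqn_leq negb_and; lia.
have d13 : F 1 <> F n.+3 by apply: Finj; rewrite // eqn_leq negb_and; lia.
have d23 : F n.+2 <> F n.+3 by apply: Finj => //; lia.
have K : cyc (F n.+3) (F n.+2) (F 1) <-> ~ cyc (F n.+3) (F 0) (F 1).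
  have H1' : cycd d (F 0) (F 1) (F n.+2) by rewrite H1; lia.
  have H2' : ~ cycd d (F 0) (F n.+3) (F n.+2) by rewrite H2; lia.
  move: H1' H2'; case: (d) => /=; rewrite /cyc; lia.
clear -S1 S2 S3 K; tauto.
Qed.
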